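(* In the setting below, assume that $U$ has the Tsirelson property: there is $C>0$ such that for every $n\in\mathbb N$, every normalized block sequence $(v_j)_{j=1}^n$ of $(u_i)$ with $n\le\min\mathrm{Supp}(v_1)$ is $C$-equivalent to the unit vector basis of $\ell_1^n$. Then $Y$ is asymptotic-$c_0$.
   Context: Setting: $X$ is a separable Banach space, $(x_n)$ a sequence in $S_X$ with $\{\pm x_n\}$ dense in $S_X$; $U$ is a Banach space with a normalized $1$-unconditional boundedly complete basis $(u_n)$. For finite $I,J\subseteq\mathbb N$, $I<J$ means $\max I<\min J$. $Z$ is the completion of $c_{00}$ (unit vectors $(e_i)$) under $\|a\|_Z=\max\{\|\sum_{j=1}^k\|\sum_{i\in I_j}a_ix_i\|_Xu_{\min I_j}\|_U: k\in\mathbb N,\ I_1<\dots<I_k\text{ intervals}\}$. $(e_j^* )$ are the coordinate functionals of the basis $(e_j)$ of $Z$ and $Y=\overline{\mathrm{span}}\{e_j^*\}\subseteq Z^*$. Asymptotic-$c_0$: there is $C'\ge1$ such that for every $k$: there is a closed finite-codimensional subspace $Y_1$ such that for all $y_1\in S_{Y_1}$ there is a closed finite-codimensional $Y_2$ ... such that for all $y_k\in S_{Y_k}$, $\|\sum_{i=1}^ka_iy_i\|\le C'\max_i|a_i|$ for all $(a_i)\in\mathbb R^k$. *)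

(* Defs.v *)
From HB Require Import structures.
From mathcomp Require Import all_boot all_order all_algebra.
From mathcomp Require Import all_classical all_reals all_analysis.
Set Implicit Arguments. Unset Strict Implicit. Unset Printing Implicit Defensive.
Import Order.TTheory GRing.Theory Num.Theory.
Import numFieldNormedType.Exports.
Local Open Scope classical_set_scope.
Local Open Scope ring_scope.

(* Indexing convention: paper index i >= 1 corresponds to Rocq index i-1 : nat. *)

Section Defs.
Variable R : realType.

Definition separable (X : normedModType R) : Prop :=
  exists d : nat -> X, forall (x : X) (eps : R), 0 < eps ->
    exists n, `|x - d n| < eps.

Definition pm_dense_in_sphere (X : normedModType R) (x : nat -> X) : Prop :=
  (forall n, `|x n| = 1) /\
  (forall (y : X), `|y| = 1 -> forall eps : R, 0 < eps ->
     exists n, `|y - x n| < eps \/ `|y + x n| < eps).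

Definition partial_sum (U : normedModType R) (u : nat -> U) (a : nat -> R)
  (N : nat) : U := \sum_(i < N) a i *: u i.

Definition schauder_basis (U : normedModType R) (u : nat -> U) : Prop :=
  (forall v : U, exists a : nat -> R, partial_sum u a @ \oo --> v) /\
  (forall (v : U) (a b : nat -> R),
     partial_sum u a @ \oo --> v -> partial_sum u b @ \oo --> v -> a = b).

Definition normalized_seq (U : normedModType R) (u : nat -> U) : Prop :=
  forall n, `|u n| = 1.

Definition one_unconditional (U : normedModType R) (u : nat -> U) : Prop :=
  forall (a eps : nat -> R) (N : nat), (forall i, eps i = 1 \/ eps i = -1) ->
    `|\sum_(i < N) (eps i * a i) *: u i| = `|\sum_(i < N) a i *: u i|.

Definition boundedly_complete (U : normedModType R) (u : nat -> U) : Prop :=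
  forall a : nat -> R, (exists M : R, forall N, `|partial_sum u a N| <= M) ->
    cvg (partial_sum u a @ \oo).

(* b j : coefficients of v_j (j < n), all supported in [0,N);
   block condition: each v_j nonzero coefficients, supp v_j < supp v_(j+1). *)
Definition block_coeffs (n N : nat) (b : nat -> nat -> R) : Prop :=
  (forall j, (j < n)%N -> exists i, (i < N)%N /\ b j i != 0) /\
  (forall j i, (N <= i)%N -> b j i = 0) /\
  (forall j1 j2 i1 i2, (j1 < j2)%N -> (j2 < n)%N ->
      b j1 i1 != 0 -> b j2 i2 != 0 -> (i1 < i2)%N).

Definition block_vec (U : normedModType R) (u : nat -> U) (N : nat)
  (b : nat -> nat -> R) (j : nat) : U := \sum_(i < N) b j i *: u i.

Definition equiv_l1 (U : normedModType R) (C : R) (n : nat) (v : nat -> U) : Prop :=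
  forall c : nat -> R,
    C^-1 * (\sum_(j < n) `|c j|) <= `|\sum_(j < n) c j *: v j| /\
    `|\sum_(j < n) c j *: v j| <= C * (\sum_(j < n) `|c j|).

(* "n <= min Supp(v_1)" with 1-based paper indices: n <= i+1 for i in supp v_1 *)
Definition tsirelson_property (U : normedModType R) (u : nat -> U) : Prop :=
  exists C : R, 0 < C /\
    forall (n N : nat) (b : nat -> nat -> R),
      block_coeffs n N b ->
      (forall j, (j < n)%N -> `|block_vec u N b j| = 1) ->
      (forall i, b 0%N i != 0 -> (n <= i.+1)%N) ->
      equiv_l1 C n (block_vec u N b).

(* An element of c00 is a : nat -> R vanishing from N on. *)
Definition supported_below (a : nat -> R) (N : nat) : Prop :=
  forall i, (N <= i)%N -> a i = 0.

(* A list of nonempty intervals [p.1, p.2) with I_1 < I_2 < ... < I_k, k >= 1 *)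
Definition interval_list (s : seq (nat * nat)) : Prop :=
  (0 < size s)%N /\ all (fun p => (p.1 < p.2)%N) s /\
  sorted (fun p q : nat * nat => (p.2 <= q.1)%N) s.

Definition Zterm (X U : normedModType R) (x : nat -> X) (u : nat -> U)
  (a : nat -> R) (s : seq (nat * nat)) : R :=
  `|\sum_(p <- s) (`|\sum_(p.1 <= i < p.2) a i *: x i|) *: u p.1|.

Definition Znorm (X U : normedModType R) (x : nat -> X) (u : nat -> U)
  (a : nat -> R) : R :=
  sup [set t | exists s, interval_list s /\ t = Zterm x u a s].

(* A functional on Z is identified with its sequence of values f i on e_i;
   pairing with a c00 vector a supported below N. *)
Definition pairing (f a : nat -> R) (N : nat) : R := \sum_(i < N) f i * a i.

(* Y = closed span of (e_j^* ) in Z^*: f is a norm-limit of finitely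
   supported functionals *)
Definition in_Y (X U : normedModType R) (x : nat -> X) (u : nat -> U)
  (f : nat -> R) : Prop :=
  forall eps : R, 0 < eps -> exists (g : nat -> R) (M : nat),
    supported_below g M /\
    forall (a : nat -> R) (N : nat), supported_below a N ->
      `|pairing (fun i => f i - g i) a N| <= eps * Znorm x u a.

Definition Ynorm (X U : normedModType R) (x : nat -> X) (u : nat -> U)
  (f : nat -> R) : R :=
  sup [set t | exists (a : nat -> R) (N : nat), supported_below a N /\
        Znorm x u a <= 1 /\ t = `|pairing f a N|].

Definition closed_fincodim_subspace (X U : normedModType R) (x : nat -> X)
  (u : nat -> U) (W : set (nat -> R)) : Prop :=
  W `<=` in_Y x u /\
  W (fun _ => 0) /\
  (forall f g, W f -> W g -> W (fun i => f i + g i)) /\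
  (forall (c : R) f, W f -> W (fun i => c * f i)) /\
  (forall f, in_Y x u f ->
     (forall eps : R, 0 < eps -> exists g, W g /\
        Ynorm x u (fun i => f i - g i) <= eps) -> W f) /\
  (exists vs : seq (nat -> R), (forall k, (k < size vs)%N -> in_Y x u (nth (fun _ => 0) vs k)) /\
     forall f, in_Y x u f -> exists c : nat -> R,
       W (fun i => f i - \sum_(k < size vs) c k * (nth (fun _ => 0) vs k) i)).

(* The asymptotic game: after k rounds the chosen vectors ys (in order)
   must satisfy the c0 upper estimate with constant C'. *)
Fixpoint asymp_c0_game (X U : normedModType R) (x : nat -> X) (u : nat -> U)
  (C' : R) (k : nat) (ys : seq (nat -> R)) : Prop :=
  match k with
  | 0%N => forall a : nat -> R,
      Ynorm x u (fun i => \sum_(m < size ys) a m * (nth (fun _ => 0) ys m) i)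
        <= C' * \big[Num.max/0]_(m < size ys) `|a m|
  | k'.+1 => exists W, closed_fincodim_subspace x u W /\
      forall y, W y -> Ynorm x u y = 1 -> asymp_c0_game x u C' k' (rcons ys y)
  end.

Definition Y_asymptotic_c0 (X U : normedModType R) (x : nat -> X) (u : nat -> U)
  : Prop :=
  exists C' : R, 1 <= C' /\ forall k : nat, asymp_c0_game x u C' k [::].

End Defs.

(* Main.v *)
Require Import Defs.
From HB Require Import structures.
From mathcomp Require Import all_boot all_order all_algebra.
From mathcomp Require Import all_classical all_reals all_analysis.
From mathcomp Require Import zify ring lra.
Import Order.TTheory GRing.Theory Num.Theory.
Import numFieldNormedType.Exports.
Set Implicit Arguments. Unset Strict Implicit. Unset Printing Implicit Defensive.
Local Open Scope classical_set_scope.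
Local Open Scope ring_scope.

Section S1.
Variable R : realType.
Variable U : normedModType R.
Variable u : nat -> U.
Hypothesis un : normalized_seq u.
Hypothesis uu : one_unconditional u.
Lemma eqle (a b : R) : a = b -> a <= b. Proof. by move->. Qed.

Lemma mono1 (f : nat -> R) N k (c : R) : `|c| <= `|f k| ->
  `|\sum_(i < N) (if (i:nat) == k then c else f i) *: u i| <= `|\sum_(i < N) f i *: u i|.
Proof.
move=> hc.
have [fk0|fk0] := eqVneq (f k) 0.
  move: hc; rewrite fk0 normr0 normr_le0 => /eqP ->.
  by apply: eqle; congr `|_|; apply: eq_bigr => i _; case: eqP => // ->; rewrite fk0.
set l := c / f k.
have hl : `|l| <= 1 by rewrite /l normrM normrV ?unitfE // ler_pdivrMr ?normr_gt0 // mul1r.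
pose eps i : R := if i == k then -1 else 1.
have heps : forall i, eps i = 1 \/ eps i = -1 by move=> i; rewrite /eps; case: eqP; auto.
have E : \sum_(i < N) (if (i:nat) == k then c else f i) *: u i =
   ((1 + l)/2) *: \sum_(i < N) f i *: u i + ((1 - l)/2) *: \sum_(i < N) (eps i * f i) *: u i.
  rewrite !scaler_sumr -big_split /=; apply: eq_bigr => i _.
  rewrite !scalerA -scalerDl; congr (_ *: _); rewrite /eps /l.
  case: eqP => [->|_]; last by field.
  by field.
rewrite E (le_trans (ler_normD _ _)) // !normrZ uu //.
have h1 : 0 <= (1 + l) / 2.
  by apply: divr_ge0 => //; move: hl; rewrite ler_norml => /andP[? _]; lra.
have h2 : 0 <= (1 - l) / 2.
  by apply: divr_ge0 => //; move: hl; rewrite ler_norml => /andP[_ ?]; lra.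
rewrite -!normrM (ger0_norm h1) (ger0_norm h2) -mulrDl.
have -> : (1 + l) / 2 + (1 - l) / 2 = 1 by field.
by rewrite mul1r.
Qed.

Lemma mono N (d e : nat -> R) : (forall i, (i < N)%N -> `|d i| <= `|e i|) ->
  `|\sum_(i < N) d i *: u i| <= `|\sum_(i < N) e i *: u i|.
Proof.
move=> hde.
pose g k i := if (i < k)%N then d i else e i.
suff : forall k, `|\sum_(i < N) g k i *: u i| <= `|\sum_(i < N) e i *: u i|.
  move/(_ N); congr (_ <= _); congr `|_|; apply: eq_bigr => i _.
  by rewrite /g ltn_ord.
elim=> [|k IH].
  by apply: eqle; congr `|_|; apply: eq_bigr => i _; rewrite /g.
apply: le_trans IH.
have [kN|kN] := ltnP k N.
  have := @mono1 (g k) N k (d k).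
  rewrite /g ltnn; move/(_ (hde _ kN)).
  congr (_ <= _); congr `|_|; apply: eq_bigr => i _.
  rewrite /g ltnS; case: (ltngtP i k) => h; rewrite ?h ?eqxx ?leqnn //.
apply: eqle; congr `|_|; apply: eq_bigr => i _; rewrite /g.
have iN := ltn_ord i.
by rewrite ltnS (leq_trans (ltnW iN) kN) (leq_trans iN kN).
Qed.

Lemma coef_le N (e : nat -> R) k : (k < N)%N -> `|e k| <= `|\sum_(i < N) e i *: u i|.
Proof.
move=> kN.
have := @mono N (fun i => if i == k then e k else 0) e.
have -> : \sum_(i < N) (if (i:nat) == k then e k else 0) *: u i = e k *: u k.
  rewrite (bigD1 (Ordinal kN)) //= eqxx big1 ?addr0 // => i /negbTE.
  by move=> h; case: eqP => [hi|]; [move: h; rewrite -(inj_eq val_inj) /= hi eqxx|rewrite scale0r].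
rewrite normrZ un mulr1; apply => i _; case: eqP => [->|]; first by [].
by rewrite normr0.
Qed.
End S1.
Section S2.
Variable R : realType.
Variables X U : normedModType R.
Variable x : nat -> X.
Variable u : nat -> U.
Hypothesis xn : forall n, `|x n| = 1.
Hypothesis un : normalized_seq u.
Hypothesis uu : one_unconditional u.

Definition cx (z : nat -> R) (p : nat * nat) : R :=
  `|\sum_(p.1 <= i < p.2) z i *: x i|.

Definition Rel (p q : nat * nat) : bool := (p.2 <= q.1)%N.

Lemma cx_ge0 z p : 0 <= cx z p. Proof. exact: normr_ge0. Qed.

Lemma cx_le z p : cx z p <= \sum_(p.1 <= i < p.2) `|z i|.
Proof.
rewrite /cx (le_trans (ler_norm_sum _ _ _)) //.
by apply: ler_sum => i _; rewrite normrZ xn mulr1.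
Qed.

Lemma ZtermE z s : Zterm x u z s = `|\sum_(p <- s) cx z p *: u p.1|.
Proof. by []. Qed.

Lemma Zterm_le_sum z s : Zterm x u z s <= \sum_(p <- s) cx z p.
Proof.
rewrite ZtermE (le_trans (ler_norm_sum _ _ _)) //.
by apply: ler_sum => p _; rewrite normrZ un mulr1 ger0_norm ?cx_ge0.
Qed.

Lemma sum_intervals_le (F : nat -> R) K : (forall i, 0 <= F i) ->
  forall s a, sorted Rel s -> all (fun p => (p.1 < p.2)%N) s ->
  all (fun p => (p.2 <= K)%N) s ->
  (if s is p :: _ then (a <= p.1)%N else (a <= K)%N) ->
  \sum_(p <- s) \sum_(p.1 <= i < p.2) F i <= \sum_(a <= i < K) F i.
Proof.
move=> F0; elim=> [|p s IH] a /=.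
  by move=> _ _ _ _; rewrite big_nil; apply: sumr_ge0.
move=> hs /andP[vp vs] /andP[kp ks] ap.
rewrite big_cons.
have hp : path Rel p s := hs.
have ss : sorted Rel s by case: s hs {IH vs ks hp} => //= q s /andP[].
have hd : is_true (if s is q :: _ then (p.2 <= q.1)%N else (p.2 <= K)%N).
  by case: s hs {IH vs ks hp ss} => //= q s /andP[].
have := IH p.2 ss vs ks hd.
move=> h; apply: le_trans (lerD (lexx _) h) _.
rewrite -big_cat_nat ?(ltnW vp) //.
rewrite [X in _ <= X](@big_cat_nat _ _ _ p.1 a K) //=; last by rewrite (leq_trans (ltnW vp)).
by rewrite lerDr; apply: sumr_ge0.
Qed.

Lemma sum_nat_trunc (F : nat -> R) N K : (N <= K)%N ->
  (forall i, (N <= i)%N -> F i = 0) ->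
  \sum_(0 <= i < K) F i = \sum_(i < N) F i.
Proof.
move=> NK F0; rewrite (@big_cat_nat _ _ _ N 0 K) //= big_mkord.
have -> : \sum_(N <= i < K) F i = 0.
  by rewrite big_nat_cond big1 // => i /andP[/andP[Ni _] _]; exact: F0.
by rewrite addr0.
Qed.

Lemma Zterm_bound z N s : supported_below z N -> interval_list s ->
  Zterm x u z s <= \sum_(i < N) `|z i|.
Proof.
move=> zs [hs0 [vs ss]].
apply: le_trans (Zterm_le_sum _ _) _.
apply: le_trans (_ : \sum_(p <- s) \sum_(p.1 <= i < p.2) `|z i| <= _).
  by apply: ler_sum => p _; apply: cx_le.
pose K := maxn N (\max_(p <- s) p.2).
have hK : all (fun p => (p.2 <= K)%N) s.
  apply/allP => p ps; rewrite /K leq_max; apply/orP; right.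
  exact: (leq_bigmax_seq _ ps).
apply: le_trans (@sum_intervals_le (fun i => `|z i|) K (fun i => normr_ge0 (z i)) s 0%N ss vs hK _) _.
  by move: hs0; case: (s).

rewrite (@sum_nat_trunc (fun i => `|z i|) N K (leq_maxl _ _)) //.
by move=> i /zs ->; rewrite normr0.
Qed.

Lemma Znorm_set0 z : [set t | exists s, interval_list s /\ t = Zterm x u z s] (Zterm x u z [:: (0%N, 1%N)]).
Proof. by exists [:: (0%N, 1%N)]; split => //; split. Qed.

Lemma Znorm_ub z N s : supported_below z N -> interval_list s ->
  Zterm x u z s <= Znorm x u z.
Proof.
move=> zs hs; apply: ub_le_sup; last by exists s.
exists (\sum_(i < N) `|z i|) => t [s' [hs' ->]]; exact: Zterm_bound.
Qed.

Lemma Znorm_le z B : (forall s, interval_list s -> Zterm x u z s <= B) ->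
  Znorm x u z <= B.
Proof.
move=> h; apply: ge_sup; first by eexists; apply: Znorm_set0.
by move=> t [s [hs ->]]; apply: h.
Qed.

Lemma Znorm_sum z N : supported_below z N -> Znorm x u z <= \sum_(i < N) `|z i|.
Proof. by move=> zs; apply: Znorm_le => s hs; apply: Zterm_bound. Qed.

Lemma Znorm_ge0 z N : supported_below z N -> 0 <= Znorm x u z.
Proof.
move=> zs; apply: le_trans (@Znorm_ub z N [:: (0%N, 1%N)] zs _).
  exact: normr_ge0.
by split => //.
Qed.

Lemma Znorm_coord z N i : supported_below z N -> `|z i| <= Znorm x u z.
Proof.
move=> zs; apply: le_trans (@Znorm_ub z N [:: (i, i.+1)] zs _); last by split => //=; rewrite ltnSn.
rewrite ZtermE big_cons big_nil addr0 normrZ un mulr1 /cx /= big_nat1 normrZ xn mulr1.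
by rewrite normr_id.
Qed.

End S2.
Section S3.
Variable R : realType.
Variables X U : normedModType R.
Variable x : nat -> X.
Variable u : nat -> U.
Hypothesis xn : forall n, `|x n| = 1.
Hypothesis un : normalized_seq u.
Hypothesis uu : one_unconditional u.

Lemma pairing_trunc (f a : nat -> R) K N : (K <= N)%N ->
  (forall i, (K <= i)%N -> f i * a i = 0) -> pairing f a N = pairing f a K.
Proof.
move=> KN h; rewrite /pairing -(big_mkord xpredT (fun i => f i * a i)).
exact: sum_nat_trunc.
Qed.

Lemma pairing_supp (f a : nat -> R) N N' : supported_below a N -> (N <= N')%N ->
  pairing f a N' = pairing f a N.
Proof. by move=> ha NN; apply: pairing_trunc => // i /ha ->; rewrite mulr0. Qed.

Lemma pairing_lin (f g a : nat -> R) c d N :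
  pairing (fun i => c * f i + d * g i) a N = c * pairing f a N + d * pairing g a N.
Proof.
rewrite /pairing !mulr_sumr -big_split /=; apply: eq_bigr => i _; ring.
Qed.

Lemma pairing_bound (g a : nat -> R) M N : supported_below g M ->
  supported_below a N ->
  `|pairing g a N| <= (\sum_(i < M) `|g i|) * Znorm x u a.
Proof.
move=> hg ha.
rewrite -(pairing_supp g ha (leq_maxl N M)).
rewrite (pairing_trunc (K := M)) ?leq_maxr //; last by move=> i /hg ->; rewrite mul0r.
rewrite /pairing mulr_suml (le_trans (ler_norm_sum _ _ _)) //.
apply: ler_sum => i _; rewrite normrM ler_wpM2l //.
exact: (Znorm_coord xn un _ ha).
Qed.

Lemma inY_fin g M : supported_below g M -> in_Y x u g.
Proof.
move=> hg eps eps0; exists g, M; split => // a N ha.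
have -> : pairing (fun i => g i - g i) a N = 0.
  by rewrite /pairing big1 // => i _; rewrite subrr mul0r.
rewrite normr0 mulr_ge0 ?(ltW eps0) //; exact: (Znorm_ge0 xn un ha).
Qed.

Lemma inY_lin f g c d : in_Y x u f -> in_Y x u g ->
  in_Y x u (fun i => c * f i + d * g i).
Proof.
move=> hf hg eps eps0.
pose e := eps / (2 * (`|c| + `|d| + 1)).
have hpos : 0 < 2 * (`|c| + `|d| + 1) by rewrite mulr_gt0 // ltr_wpDl // addr_ge0.
have e0 : 0 < e by rewrite divr_gt0.
have [g1 [M1 [h1 p1]]] := hf e e0.
have [g2 [M2 [h2 p2]]] := hg e e0.
exists (fun i => c * g1 i + d * g2 i), (maxn M1 M2); split.
  move=> i; rewrite geq_max => /andP[/h1 -> /h2 ->]; by rewrite !mulr0 addr0.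
move=> a N ha.
have -> : pairing (fun i => c * f i + d * g i - (c * g1 i + d * g2 i)) a N =
  c * pairing (fun i => f i - g1 i) a N + d * pairing (fun i => g i - g2 i) a N.
  rewrite -pairing_lin; congr pairing; apply: funext => i; ring.
have Z0 := Znorm_ge0 xn un ha.
apply: le_trans (ler_normD _ _) _; rewrite !normrM.
apply: le_trans (lerD (ler_wpM2l (normr_ge0 c) (p1 a N ha)) (ler_wpM2l (normr_ge0 d) (p2 a N ha))) _.
rewrite !mulrA -mulrDl.
have : (`|c| + `|d|) * e <= eps.
  rewrite /e mulrA ler_pdivrMr // mulrC ler_wpM2l ?(ltW eps0) //.
  by have := normr_ge0 c; have := normr_ge0 d; lra.
move=> h; apply: ler_wpM2r => //; apply: (le_trans _ h).
by rewrite /e; apply: eqle; ring.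
Qed.

Lemma inY_sub f g : in_Y x u f -> in_Y x u g -> in_Y x u (fun i => f i - g i).
Proof.
move=> hf hg; have := inY_lin 1 (-1) hf hg.
by congr in_Y; apply: funext => i; ring.
Qed.

Lemma inY_add f g : in_Y x u f -> in_Y x u g -> in_Y x u (fun i => f i + g i).
Proof.
move=> hf hg; have := inY_lin 1 1 hf hg.
by congr in_Y; apply: funext => i; ring.
Qed.

Lemma inY_scale c f : in_Y x u f -> in_Y x u (fun i => c * f i).
Proof.
move=> hf; have := inY_lin c 0 hf hf.
by congr in_Y; apply: funext => i; ring.
Qed.

Definition Yset f := [set t : R | exists (a : nat -> R) (N : nat), supported_below a N /\
        Znorm x u a <= 1 /\ t = `|pairing f a N|].

Lemma YnormE f : Ynorm x u f = sup (Yset f). Proof. by []. Qed.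

Lemma Yset0 f : Yset f 0.
Proof.
exists (fun _ => 0), 0%N; split => //; split.
  by apply: le_trans (@Znorm_sum _ _ _ x u xn un (fun _ => 0) 0%N _) _ => //; rewrite big_ord0.
by rewrite /pairing big_ord0 normr0.
Qed.

Lemma Yset_ub f : in_Y x u f -> has_ubound (Yset f).
Proof.
move=> hf; have [g [M [hg p]]] := hf 1 ltr01.
exists ((\sum_(i < M) `|g i|) + 1) => t [a [N [ha [Za ->]]]].
have -> : pairing f a N = pairing g a N + pairing (fun i => f i - g i) a N.
  rewrite -[pairing g a N]mul1r -[pairing (fun i => f i - g i) a N]mul1r -pairing_lin.
  by congr pairing; apply: funext => i; ring.
apply: le_trans (ler_normD _ _) _; apply: lerD.
  apply: le_trans (pairing_bound hg ha) _.
  by rewrite ler_piMr // sumr_ge0.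
by apply: le_trans (p a N ha) _; rewrite mul1r.
Qed.

Lemma Ynorm_le f B : (forall a N, supported_below a N -> Znorm x u a <= 1 ->
  `|pairing f a N| <= B) -> Ynorm x u f <= B.
Proof.
move=> h; apply: ge_sup; first by exists 0; apply: Yset0.
by move=> t [a [N [ha [Za ->]]]]; apply: h.
Qed.

Lemma Ynorm_ge f a N : in_Y x u f -> supported_below a N -> Znorm x u a <= 1 ->
  `|pairing f a N| <= Ynorm x u f.
Proof.
move=> hf ha Za; apply: ub_le_sup; first exact: Yset_ub.
by exists a, N.
Qed.

Lemma Ynorm_ge0 f : in_Y x u f -> 0 <= Ynorm x u f.
Proof.
move=> hf; apply: le_trans (Ynorm_ge (a := fun _ => 0) (N := 0%N) hf _ _) => //.
by apply: le_trans (@Znorm_sum _ _ _ x u xn un (fun _ => 0) 0%N _) _ => //; rewrite big_ord0.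
Qed.

Lemma Zterm_scale a k s : 0 <= k -> Zterm x u (fun i => a i * k) s = k * Zterm x u a s.
Proof.
move=> k0.
have E : forall p, cx x (fun i => a i * k) p = k * cx x a p.
  move=> p; rewrite /cx -[X in X * _](ger0_norm k0) -normrZ scaler_sumr; congr `|_|.
  by apply: eq_bigr => i _; rewrite scalerA mulrC.
rewrite !ZtermE; transitivity `|k *: \sum_(p <- s) cx x a p *: u p.1|.
  congr `|_|; rewrite scaler_sumr; apply: eq_bigr => p _; by rewrite E scalerA.
by rewrite normrZ ger0_norm.
Qed.

Lemma Ynorm_pair f a N : in_Y x u f -> supported_below a N ->
  `|pairing f a N| <= Ynorm x u f * Znorm x u a.
Proof.
move=> hf ha.
have Z0 := Znorm_ge0 xn un ha.
have [Zz|Zp] := eqVneq (Znorm x u a) 0.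
  have a0 : forall i, a i = 0.
    by move=> i; apply/eqP; rewrite -normr_le0 -Zz (Znorm_coord xn un _ ha).
  rewrite Zz mulr0 /pairing big1 ?normr0 // => i _; by rewrite a0 mulr0.
have Zpos : 0 < Znorm x u a by rewrite lt_def Zp Z0.
pose a' := fun i => a i * (Znorm x u a)^-1.
have ha' : supported_below a' N by move=> i /ha; rewrite /a' => ->; rewrite mul0r.
have Za' : Znorm x u a' <= 1.
  apply: Znorm_le => s hs; rewrite /a' Zterm_scale ?invr_ge0 //.
  by rewrite mulrC ler_pdivrMr // mul1r (Znorm_ub xn un ha hs).
have := Ynorm_ge hf ha' Za'.
have -> : pairing f a' N = pairing f a N * (Znorm x u a)^-1.
  by rewrite /pairing mulr_suml; apply: eq_bigr => i _; rewrite /a' mulrA.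
by rewrite normrM (ger0_norm (ltW (_ : 0 < (Znorm x u a)^-1))) ?invr_gt0 // ler_pdivrMr.
Qed.

Lemma Ynorm_coord f i : in_Y x u f -> `|f i| <= Ynorm x u f.
Proof.
move=> hf; pose e := fun j => if j == i then (1:R) else 0.
have he : supported_below e i.+1.
  by move=> j ij; rewrite /e; case: eqP => // ji; move: ij; rewrite ji ltnn.
have Ze : Znorm x u e <= 1.
  apply: le_trans (Znorm_sum xn un he) _.
  rewrite big_ord_recr /= big1 ?add0r /e ?eqxx ?normr1 // => j _.
  by case: eqP => [ji|]; [move: (ltn_ord j); rewrite ji ltnn|rewrite normr0].
have := Ynorm_ge hf he Ze.
suff -> : pairing f e i.+1 = f i by [].
rewrite /pairing big_ord_recr /= big1 ?add0r /e ?eqxx ?mulr1 // => j _.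
by case: eqP => [ji|]; [move: (ltn_ord j); rewrite ji ltnn|rewrite mulr0].
Qed.

End S3.
Section S4.
Variable R : realType.
Variables X U : normedModType R.
Variable x : nat -> X.
Variable u : nat -> U.
Hypothesis xn : forall n, `|x n| = 1.
Hypothesis un : normalized_seq u.

Definition Wm (m : nat) : set (nat -> R) :=
  fun f => in_Y x u f /\ forall i, (i < m)%N -> f i = 0.

Lemma small_zero (r : R) : (forall eps, 0 < eps -> `|r| <= eps) -> r = 0.
Proof.
move=> h; apply/eqP; rewrite -normr_le0.
have [r0|rp] := eqVneq r 0; first by rewrite r0 normr0.
have hr : 0 < `|r| by rewrite normr_gt0.
have := h (`|r| / 2) (divr_gt0 hr (ltr0Sn _ 1)).
move=> h2; exfalso; move: h2; apply/negP; rewrite -ltNge; lra.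
Qed.

Lemma sum_delta m (f : nat -> R) i :
  \sum_(k < m) f k * (if i == (k:nat) then 1 else 0) = if (i < m)%N then f i else 0.
Proof.
case: ltnP => im.
  rewrite (bigD1 (Ordinal im)) //= eqxx mulr1 big1 ?addr0 // => k hk.
  case: eqP => [ik|]; last by rewrite mulr0.
  by move: hk; rewrite -(inj_eq val_inj) /= ik eqxx.
rewrite big1 // => k _; case: eqP => [ik|]; last by rewrite mulr0.
by move: (ltn_ord k); rewrite -ik ltnNge im.
Qed.

Lemma Wm_sub m : closed_fincodim_subspace x u (Wm m).
Proof.
split; first by move=> f [].
split; first by split => //; apply: (@inY_fin _ _ _ x u xn un _ 0%N).
split; first by move=> f g [hf zf] [hg zg]; split; [exact: (inY_add xn un)|move=> i im; rewrite zf ?zg ?addr0].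
split; first by move=> c f [hf zf]; split; [exact: (inY_scale xn un)|move=> i im; rewrite zf ?mulr0].
split.
  move=> f hf hc; split => // i im.
  apply: small_zero => eps eps0.
  have [g [[hg zg] hn]] := hc eps eps0.
  apply: le_trans hn.
  have := Ynorm_coord xn un i (inY_sub xn un hf hg).
  by rewrite zg // subr0.
pose vs := mkseq (fun k (i : nat) => if i == k then (1:R) else 0) m.
exists vs; split.
  move=> k; rewrite size_mkseq => km; rewrite nth_mkseq //.
  apply: (@inY_fin _ _ _ x u xn un _ k.+1) => i ki.
  by case: eqP => // ik; move: ki; rewrite ik ltnn.
move=> f hf; exists f.
have E : forall i, \sum_(k < size vs) f k * nth (fun _ => 0) vs k i = if (i < m)%N then f i else 0.
  move=> i; rewrite -(sum_delta m f i) size_mkseq; apply: eq_bigr => k _.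
  by rewrite nth_mkseq.
have -> : (fun i => f i - \sum_(k < size vs) f k * nth (fun _ => 0) vs k i) =
          (fun i => f i - (if (i < m)%N then f i else 0)).
  by apply: funext => i; rewrite E.
split.
  apply: (inY_sub xn un) => //; apply: (@inY_fin _ _ _ x u xn un _ m).
  by move=> i; rewrite leqNgt => /negbTE ->.
by move=> i ->; rewrite subrr.
Qed.

End S4.
Section S5.
Variable R : realType.
Variables X U : normedModType R.
Variable x : nat -> X.
Variable u : nat -> U.
Hypothesis xn : forall n, `|x n| = 1.
Hypothesis un : normalized_seq u.
Hypothesis uu : one_unconditional u.

Definition meets (m m' : nat) (p : nat * nat) : bool := (p.1 < m')%N && (m < p.2)%N.
Definition clipp (m m' : nat) (p : nat * nat) : nat * nat := (maxn p.1 m, minn p.2 m').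
Definition clip m m' (s : seq (nat * nat)) := [seq clipp m m' p | p <- s & meets m m' p].
Definition zb (z : nat -> R) (m m' : nat) : nat -> R :=
  fun i => if (m <= i < m')%N then z i else 0.
Definition coef (z : nat -> R) (s : seq (nat * nat)) (i : nat) : R :=
  \sum_(p <- s | p.1 == i) cx x z p.

Lemma norm_sum_le (f : nat -> R) L : `|\sum_(i < L) f i *: u i| <= \sum_(i < L) `|f i|.
Proof.
apply: le_trans (ler_norm_sum _ _ _) _.
by apply: ler_sum => i _; rewrite normrZ un mulr1.
Qed.

Lemma VC (c : nat * nat -> R) s L :
  (forall p, p \in s -> (L <= p.1)%N -> c p = 0) ->
  \sum_(p <- s) c p *: u p.1 = \sum_(i < L) (\sum_(p <- s | p.1 == i) c p) *: u i.
Proof.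
move=> h.
have -> : \sum_(i < L) (\sum_(p <- s | p.1 == i) c p) *: u i =
   \sum_(i < L) \sum_(p <- s) (if p.1 == i then c p *: u i else 0).
  apply: eq_bigr => i _; rewrite scaler_suml big_mkcond /=; apply: eq_bigr => p _.
  by case: ifP => //; rewrite scale0r.
rewrite exchange_big /= big_seq [RHS]big_seq; apply: eq_bigr => p ps.
case: (ltnP p.1 L) => pL.
  rewrite (bigD1 (Ordinal pL)) //= eqxx big1 ?addr0 // => i hi.
  case: eqP => // e; move: hi; rewrite -(inj_eq val_inj) /= -e eqxx //.
rewrite h // scale0r big1 // => i _; case: eqP => // e.
by move: (ltn_ord i); rewrite -e ltnNge pL.
Qed.

Lemma zb_sum z m m' p : (p.1 < p.2)%N -> meets m m' p -> (m < m')%N ->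
  \sum_(p.1 <= i < p.2) zb z m m' i *: x i =
  \sum_((clipp m m' p).1 <= i < (clipp m m' p).2) z i *: x i.
Proof.
move=> vp /andP[h1 h2] mm /=.
rewrite (@big_cat_nat _ _ _ (maxn p.1 m)) ?leq_maxl //=; last by lia.
rewrite (@big_cat_nat _ _ _ (minn p.2 m') (maxn p.1 m)) //=; try lia.
rewrite big_nat_cond big1 ?add0r; last first.
  move=> i /andP[/andP[a b] _]; rewrite /zb.
  by rewrite (_ : (m <= i < m')%N = false) ?scale0r //; lia.
rewrite [X in _ + X]big_nat_cond [X in _ + X]big1 ?addr0; last first.
  move=> i /andP[/andP[a b] _]; rewrite /zb.
  by rewrite (_ : (m <= i < m')%N = false) ?scale0r //; lia.
rewrite big_nat_cond [RHS]big_nat_cond; apply: eq_bigr => i /andP[/andP[a b] _].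
by rewrite /zb; have -> : (m <= i < m')%N = true by lia.
Qed.

Lemma cx_clip z m m' p : (p.1 < p.2)%N -> meets m m' p -> (m < m')%N ->
  cx x (zb z m m') p = cx x z (clipp m m' p).
Proof. by move=> vp hm mm; rewrite /cx zb_sum. Qed.

Lemma cx_nonmeet z m m' p : ~~ meets m m' p -> cx x (zb z m m') p = 0.
Proof.
move=> hm; rewrite /cx big_nat_cond big1 ?normr0 // => i /andP[/andP[a b] _].
rewrite /zb; have -> : (m <= i < m')%N = false.
  by move: hm; rewrite /meets negb_and -!leqNgt => /orP[]; lia.
by rewrite scale0r.
Qed.

Lemma coef_clip z m m' s i : all (fun p => (p.1 < p.2)%N) s -> (m < m')%N ->
  coef z (clip m m' s) i =
  \sum_(p <- s) (if meets m m' p && (maxn p.1 m == i) then cx x (zb z m m') p else 0).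
Proof.
move=> vs mm; rewrite /coef /clip big_map big_filter_cond big_mkcond big_seq [RHS]big_seq.
apply: eq_bigr => p ps; case: ifP => // /andP[hm _].
by rewrite cx_clip //; move/allP: vs => /(_ p ps).
Qed.

Lemma coef_E z s i : coef z s i = \sum_(p <- s) (if p.1 == i then cx x z p else 0).
Proof. by rewrite /coef big_mkcond. Qed.

Lemma coef_ge0 z s i : 0 <= coef z s i.
Proof. by apply: sumr_ge0 => p _; apply: cx_ge0. Qed.

Lemma coef_clip_out z m m' s i : all (fun p => (p.1 < p.2)%N) s -> (m < m')%N ->
  ~~ (m <= i < m')%N -> coef z (clip m m' s) i = 0.
Proof.
move=> vs mm hi; rewrite coef_clip // big1 // => p _.
case: ifP => // /andP[/andP[a b] /eqP c]; exfalso; move: hi; rewrite -c; lia.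
Qed.

Lemma BL z m m' L s : (m < m')%N -> (m' <= L)%N -> all (fun p => (p.1 < p.2)%N) s ->
  Zterm x u (zb z m m') s <= 2 * `|\sum_(i < L) coef z (clip m m' s) i *: u i|.
Proof.
move=> mm mL vs.
set e := coef z (clip m m' s).
set d := coef (zb z m m') s.
rewrite ZtermE (@VC _ _ L); last first.
  by move=> p ps Lp; apply: cx_nonmeet; rewrite /meets negb_and -leqNgt (leq_trans mL Lp).
rewrite -/(coef _ _ _).
have -> : \sum_(i < L) coef (zb z m m') s i *: u i =
   \sum_(i < L) (if (i < m)%N then d i else 0) *: u i +
   \sum_(i < L) (if (i < m)%N then 0 else d i) *: u i.
  rewrite -big_split /=; apply: eq_bigr => i _; rewrite -scalerDl.
  by case: ifP; rewrite ?addr0 ?add0r.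
apply: le_trans (ler_normD _ _) _; rewrite mulr2n mulrDl mul1r.
apply: lerD.
  apply: le_trans (norm_sum_le (fun i => if (i < m)%N then d i else 0) L) _.
  apply: (@le_trans _ _ (\sum_(i < L) (if (i < m)%N then d i else 0))).
    apply: ler_sum => i _.
    by case: ifP => _; rewrite ?normr0 // ger0_norm // coef_ge0.
  apply: le_trans (coef_le un uu e (leq_trans mm mL)).
  rewrite ger0_norm ?coef_ge0 // /e coef_clip // /d.
  have -> : \sum_(i < L) (if (i < m)%N then coef (zb z m m') s i else 0) =
     \sum_(p <- s) \sum_(i < L) (if (i < m)%N && (p.1 == i) then cx x (zb z m m') p else 0).
    rewrite exchange_big /=; apply: eq_bigr => i _; rewrite coef_E.
    case: ifP => _ /=; last by rewrite big1.
    by [].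
  apply: ler_sum => p _.
  have -> : \sum_(i < L) (if (i < m)%N && (p.1 == i) then cx x (zb z m m') p else 0) =
            \sum_(i < L) (if (p.1 < m)%N then cx x (zb z m m') p else 0) * (if p.1 == (i:nat) then 1 else 0).
    apply: eq_bigr => i _; case: (eqVneq (i:nat) p.1) => [->|ne]; first by rewrite ?eqxx ?andbT ?mulr1.
    by rewrite andbF mulr0.
  rewrite (sum_delta L (fun _ => if (p.1 < m)%N then cx x (zb z m m') p else 0) p.1).
  have c0 := cx_ge0 x (zb z m m') p.
  have R0 : 0 <= (if meets m m' p && (maxn p.1 m == m) then cx x (zb z m m') p else 0).
    by case: ifP.
  case: (ltnP p.1 m) => pm; last by rewrite if_same; case: ifP.
  rewrite eqxx andbT; case: ifP => _; case: ifP => hmt; rewrite ?lexx //.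
  by rewrite cx_nonmeet ?hmt.
apply: (@mono _ _ u uu L (fun i => if (i < m)%N then 0 else d i) e) => i iL; case: ifP => im; first by rewrite normr0 normr_ge0.
rewrite !ger0_norm ?coef_ge0 // /d /e coef_clip // coef_E.
apply: ler_sum => p _.
have c0 := cx_ge0 x (zb z m m') p.
case: eqP => [pe|pe]; last by case: ifP.
have hmx : maxn p.1 m == i by apply/eqP; move/negbT: im; rewrite -leqNgt; lia.
rewrite hmx andbT; case: (boolP (meets m m' p)) => hmt; first by rewrite lexx.
by rewrite cx_nonmeet.
Qed.

End S5.
Section S6.
Variable R : realType.
Variables X U : normedModType R.
Variable x : nat -> X.
Variable u : nat -> U.
Hypothesis xn : forall n, `|x n| = 1.
Hypothesis un : normalized_seq u.
Hypothesis uu : one_unconditional u.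

Definition inb (a b : nat) (q : nat * nat) : bool :=
  [&& (a <= q.1)%N, (q.1 < q.2)%N & (q.2 <= b)%N].
Definition good a b t := all (inb a b) t && pairwise Rel t.

Lemma sorted_pw s : all (fun p => (p.1 < p.2)%N) s -> sorted Rel s -> pairwise Rel s.
Proof.
move=> vs ss; rewrite -(sorted_pairwise_in (P := fun p : nat * nat => (p.1 < p.2)%N)) //.
move=> q p r; rewrite /Rel /= => hp hq hr; lia.
Qed.

Lemma clip_good m m' s : (m < m')%N -> sorted Rel s -> all (fun p => (p.1 < p.2)%N) s ->
  good m m' (clip m m' s).
Proof.
move=> mm ss vs; apply/andP; split.
  apply/allP => q /mapP [p]; rewrite mem_filter => /andP[hm ps] ->.
  move/allP: vs => /(_ p ps); move: hm; rewrite /meets /inb /clipp /= => /andP[a b] c.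
  apply/and3P; split; lia.
rewrite /clip pairwise_map; apply: pairwise_filter.
apply: (sub_pairwise _ (sorted_pw vs ss)) => p q; rewrite /Rel /clipp /= => h; lia.
Qed.

Lemma good_cat a b c t1 t2 : (a <= b)%N -> (b <= c)%N -> good a b t1 -> good b c t2 ->
  good a c (t1 ++ t2).
Proof.
move=> ab bc /andP[a1 p1] /andP[a2 p2]; apply/andP; split.
  rewrite all_cat; apply/andP; split.
    apply/allP => q /(allP a1); rewrite /inb => /and3P[h1 h2 h3]; apply/and3P; split; lia.
  apply/allP => q /(allP a2); rewrite /inb => /and3P[h1 h2 h3]; apply/and3P; split; lia.
rewrite pairwise_cat; apply/and3P; split => //; apply/allrelP => q q' /(allP a1) + /(allP a2).
rewrite /inb /Rel => /and3P[h1 h2 h3] /and3P[h4 h5 h6]; lia.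
Qed.

Lemma ms_mono n (ms : nat -> nat) : (forall j, (j < n)%N -> (ms j < ms j.+1)%N) ->
  forall i j, (i <= j)%N -> (j <= n)%N -> (ms i <= ms j)%N.
Proof.
move=> h i; elim=> [|j IH] ij jn.
  by move: ij; rewrite leqn0 => /eqP ->.
move: ij; rewrite leq_eqVlt => /orP[/eqP -> //|ij].
apply: leq_trans (IH ij (ltnW jn)) (ltnW (h j jn)).
Qed.

Lemma good_flat n (ms : nat -> nat) (T : nat -> seq (nat * nat)) :
  (forall j, (j < n)%N -> (ms j < ms j.+1)%N) ->
  (forall j, (j < n)%N -> good (ms j) (ms j.+1) (T j)) ->
  good (ms 0%N) (ms n) (flatten [seq T j | j <- iota 0 n]).
Proof.
elim: n => [|n IH] hm hg; first by [].
rewrite -addn1 iotaD map_cat flatten_cat /= cats0 addn1.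
apply: good_cat.
- exact: (ms_mono hm (leq0n n) (leqnSn n)).
- exact: ltnW (hm n (ltnSn n)).
- by apply: IH => j jn; [apply: hm|apply: hg]; apply: ltnW.
- exact: hg.
Qed.

Lemma realize z N n (ms : nat -> nat) (T : nat -> seq (nat * nat)) :
  supported_below z N ->
  (forall j, (j < n)%N -> (ms j < ms j.+1)%N) ->
  (forall j, (j < n)%N -> good (ms j) (ms j.+1) (T j)) ->
  `|\sum_(j < n) \sum_(q <- T j) cx x z q *: u q.1| <= Znorm x u z.
Proof.
move=> zs hm hg.
set L := maxn N (ms n).
set F := flatten [seq T j | j <- iota 0 n].
have gF := good_flat hm hg.
have gt : good (ms 0%N) L.+1 (F ++ [:: (L, L.+1)]).
  apply: good_cat gF _.
  - exact: (ms_mono hm (leq0n n) (leqnn n)).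
  - by apply: leq_trans (leq_maxr N (ms n)) (leqnSn _).
  - by rewrite /good /inb /= /L !andbT; apply/and3P; split; lia.
have it : interval_list (F ++ [:: (L, L.+1)]).
  move: gt => /andP[ga gp]; split; first by rewrite size_cat addn1.
  split; last exact: pairwise_sorted.
  by apply/allP => q /(allP ga) /and3P[].
apply: le_trans (Znorm_ub xn un zs it).
rewrite ZtermE big_cat /= big_cons big_nil.
have -> : cx x z (L, L.+1) = 0.
  rewrite /cx /= big_nat1 zs ?scale0r ?normr0 //; exact: leq_maxl.
rewrite scale0r !addr0 /F big_flatten big_map.
have -> : iota 0 n = index_iota 0 n by rewrite /index_iota subn0.
by rewrite big_mkord.
Qed.

Lemma Znorm_adh z N d : supported_below z N -> 0 < d ->
  exists s, interval_list s /\ Znorm x u z - d < Zterm x u z s.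
Proof.
move=> zs d0.
have hs : has_sup [set t : R | exists s, interval_list s /\ t = Zterm x u z s].
  split; first by eexists; apply: Znorm_set0.
  by exists (\sum_(i < N) `|z i|) => t [s [hs ->]]; apply: (Zterm_bound xn un).
have [t [s [hs1 ->]] ht] := sup_adherent d0 hs.
by exists s.
Qed.

Lemma le_eps (A B K : R) : 0 <= K -> (forall d, 0 < d -> A <= B + K * d) -> A <= B.
Proof.
move=> K0 h; rewrite leNgt; apply/negP => BA.
have d0 : 0 < (A - B) / (K + 1) by rewrite divr_gt0 // ?subr_gt0 //; lra.
have := h _ d0.
have : K * ((A - B) / (K + 1)) < A - B.
  rewrite mulrA ltr_pdivrMr; last lra.
  nra.
move=> *; lra.
Qed.

Lemma zb_supp (z : nat -> R) N m m' : supported_below z N -> supported_below (zb z m m') N.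
Proof. by move=> zs i /zs; rewrite /zb => ->; case: ifP. Qed.

Lemma SB z N m m' : supported_below z N -> (m < m')%N ->
  Znorm x u (zb z m m') <= 2 * Znorm x u z.
Proof.
move=> zs mm; apply: Znorm_le => s [hs0 [vs ss]].
apply: le_trans (BL x un uu z mm (leqnn m') vs) _.
rewrite ler_pM2l //.
rewrite -(@VC _ _ u (cx x z) _ m'); last first.
  move=> q /mapP[p]; rewrite mem_filter => /andP[hm ps] -> /=.
  move: hm; rewrite /meets => /andP[a b] c; lia.
have := @realize z N 1 (fun j => if j == 0%N then m else m') (fun _ => clip m m' s) zs.
rewrite big_ord1; apply.
  by case.
by case => // _; apply: clip_good.
Qed.

End S6.
Section S7.
Variable R : realType.
Variables X U : normedModType R.
Variable x : nat -> X.
Variable u : nat -> U.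
Hypothesis xn : forall n, `|x n| = 1.
Hypothesis un : normalized_seq u.
Hypothesis uu : one_unconditional u.
Variable C : R.
Hypothesis C0 : 0 < C.
Hypothesis Htsi : forall (n N : nat) (b : nat -> nat -> R),
      block_coeffs n N b ->
      (forall j, (j < n)%N -> `|block_vec u N b j| = 1) ->
      (forall i, b 0%N i != 0 -> (n <= i.+1)%N) ->
      equiv_l1 C n (block_vec u N b).

Lemma TS n (ms : nat -> nat) (e : nat -> nat -> R) d :
  0 < d -> (n <= ms 0%N)%N ->
  (forall j, (j < n)%N -> (ms j < ms j.+1)%N) ->
  (forall j i, 0 <= e j i) ->
  (forall j i, (j < n)%N -> ~~ (ms j <= i < ms j.+1)%N -> e j i = 0) ->
  \sum_(j < n) `|\sum_(i < ms n) e j i *: u i| <=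
    C * (`|\sum_(j < n) \sum_(i < ms n) e j i *: u i| + n%:R * d).
Proof.
move=> d0 n0 hm e0 eout.
set M := ms n.
have msM : forall j, (j < n)%N -> (ms j < M)%N.
  by move=> j jn; apply: leq_trans (hm j jn) (ms_mono hm jn (leqnn n)).
pose e' j i := e j i + (if i == ms j then d else 0).
pose w' j := \sum_(i < M) e' j i *: u i.
have w'E : forall j, (j < n)%N -> w' j = \sum_(i < M) e j i *: u i + d *: u (ms j).
  move=> j jn; rewrite /w' /e'.
  under eq_bigr => i _ do rewrite scalerDl.
  rewrite big_split /=; congr (_ + _).
  rewrite (bigD1 (Ordinal (msM j jn))) //= eqxx big1 ?addr0 // => i ne.
  case: eqP => [ie|]; last by rewrite scale0r.
  by exfalso; move: ne; rewrite -(inj_eq val_inj) /= ie eqxx.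
have e'0 : forall j i, 0 <= e' j i.
  by move=> j i; rewrite /e'; apply: addr_ge0 => //; case: ifP => // _; apply: ltW.
have nwd : forall j, (j < n)%N -> d <= `|w' j|.
  move=> j jn; apply: le_trans (coef_le un uu (e' j) (msM j jn)).
  by rewrite ger0_norm // /e' eqxx lerDr.
have nwp : forall j, (j < n)%N -> 0 < `|w' j| by move=> j jn; apply: lt_le_trans d0 (nwd j jn).
have wle : forall j, (j < n)%N -> `|\sum_(i < M) e j i *: u i| <= `|w' j|.
  move=> j jn; apply: (@mono _ _ u uu M (e j) (e' j)) => i _.
  by rewrite !ger0_norm // /e' lerDl; case: ifP => // _; apply: ltW.
pose b j i := if (j < n)%N then e' j i / `|w' j| else 0.
have bv : forall j, (j < n)%N -> block_vec u M b j = (`|w' j|)^-1 *: w' j.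
  move=> j jn; rewrite /block_vec /w' scaler_sumr; apply: eq_bigr => i _.
  by rewrite /b jn scalerA mulrC.
have nz : forall j i, (j < n)%N -> b j i != 0 -> (ms j <= i < ms j.+1)%N.
  move=> j i jn; apply: contraTT => hout; rewrite negbK /b jn /e' (eout j i jn hout) add0r.
  case: (eqVneq i (ms j)) => [ie|_]; last by rewrite mul0r eqxx.
  by exfalso; move: hout; rewrite ie leqnn (hm j jn).
have bc : block_coeffs n M b.
  split.
    move=> j jn; exists (ms j); split; first exact: msM.
    rewrite /b jn mulf_neq0 // ?invr_neq0 //; last by rewrite gt_eqF // nwp.
    by rewrite gt_eqF // /e' eqxx; apply: lt_le_trans d0 _; rewrite lerDr.
  split.
    move=> j i Mi; rewrite /b; case: ifP => jn //.
    rewrite /e' eout //; last by apply/negP => /andP[_ h]; have h2 := ms_mono hm jn (leqnn n); move: Mi; rewrite /M; lia.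
    rewrite add0r; case: eqP => [ie|]; last by rewrite mul0r.
    by exfalso; move: (msM j jn); rewrite -ie ltnNge Mi.
  move=> j1 j2 i1 i2 j12 j2n h1 h2.
  have /andP[_ a] := nz j1 i1 (ltn_trans j12 j2n) h1.
  have /andP[c _] := nz j2 i2 j2n h2.
  apply: leq_trans a (leq_trans (ms_mono hm j12 (ltnW j2n)) c).
have bn : forall j, (j < n)%N -> `|block_vec u M b j| = 1.
  move=> j jn; rewrite bv // normrZ normrV ?unitfE ?gt_eqF ?nwp // normr_id mulVf //.
  by rewrite gt_eqF ?nwp.
have b0 : forall i, b 0%N i != 0 -> (n <= i.+1)%N.
  move=> i; case: (posnP n) => [n00|np].
    by rewrite /b n00 ltnn eqxx.
  by move/(nz _ _ np) => /andP[a _]; apply: leq_trans n0 (leq_trans a (leqnSn i)).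
have [low _] := Htsi bc bn b0 (fun j => `|w' j|).
have sumE : \sum_(j < n) `|w' j| *: block_vec u M b j = \sum_(j < n) w' j.
  apply: eq_bigr => j _; rewrite bv // scalerA mulfV ?scale1r //.
  by rewrite gt_eqF ?nwp.
rewrite sumE in low.
have sumE2 : \sum_(j < n) w' j =
  \sum_(j < n) \sum_(i < M) e j i *: u i + \sum_(j < n) d *: u (ms j).
  by rewrite -big_split /=; apply: eq_bigr => j _; rewrite w'E.
have hn : `|\sum_(j < n) w' j| <= `|\sum_(j < n) \sum_(i < M) e j i *: u i| + n%:R * d.
  rewrite sumE2; apply: le_trans (ler_normD _ _) _; rewrite lerD2l.
  apply: le_trans (ler_norm_sum _ _ _) _.
  under eq_bigr => j _ do rewrite normrZ un mulr1 (ger0_norm (ltW d0)).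
  by rewrite sumr_const card_ord mulr_natl.
apply: le_trans (_ : \sum_(j < n) `|w' j| <= _).
  by apply: ler_sum => j _; apply: wle.
have : \sum_(j < n) `|w' j| = C * (C^-1 * \sum_(j < n) Num.norm (`|w' j|)).
  rewrite mulrA mulfV ?gt_eqF // mul1r; apply: eq_bigr => j _; by rewrite normr_id.
move=> ->; rewrite ler_pM2l //; exact: le_trans low hn.
Qed.

Lemma KL n (ms : nat -> nat) z N :
  (n <= ms 0%N)%N -> (forall j, (j < n)%N -> (ms j < ms j.+1)%N) ->
  supported_below z N ->
  \sum_(j < n) Znorm x u (zb z (ms j) (ms j.+1)) <= 2 * C * Znorm x u z.
Proof.
move=> n0 hm zs.
apply: (@le_eps _ _ _ (2 * C * n%:R + n%:R)).
  by apply: addr_ge0 => //; apply: mulr_ge0 => //; apply: mulr_ge0 => //; apply: ltW.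
move=> d d0.
have : forall j, exists s, (j < n)%N -> interval_list s /\
   Znorm x u (zb z (ms j) (ms j.+1)) - d < Zterm x u (zb z (ms j) (ms j.+1)) s.
  move=> j; have [s [hs hl]] := Znorm_adh xn un (zb_supp (ms j) (ms j.+1) zs) d0.
  by exists s.
move=> /choice [ss hss].
set M := ms n.
pose e j := coef x z (clip (ms j) (ms j.+1) (ss j)).
have msle : forall j, (j < n)%N -> (ms j.+1 <= M)%N.
  by move=> j jn; rewrite /M; apply: (ms_mono hm jn (leqnn n)).
have step1 : \sum_(j < n) Znorm x u (zb z (ms j) (ms j.+1)) <=
    \sum_(j < n) (2 * `|\sum_(i < M) e j i *: u i| + d).
  apply: ler_sum => j _; have [[hs0 [vs ss0]] hl] := hss j (ltn_ord j).
  have := BL x un uu z (hm j (ltn_ord j)) (msle j (ltn_ord j)) vs.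
  move=> h; rewrite -lerBlDr; apply: le_trans (ltW hl) h.
apply: le_trans step1 _.
rewrite big_split /= sumr_const card_ord -mulr_sumr.
have vsj : forall j, (j < n)%N -> all (fun p : nat * nat => (p.1 < p.2)%N) (ss j).
  by move=> j jn; have [[_ [vs _]] _] := hss j jn.
have step3 := @TS n ms e d d0 n0 hm (fun j i => coef_ge0 x z _ i)
   (fun j i jn hout => coef_clip_out x z (vsj j jn) (hm j jn) hout).
have step4 : `|\sum_(j < n) \sum_(i < M) e j i *: u i| <= Znorm x u z.
  have -> : \sum_(j < n) \sum_(i < M) e j i *: u i =
      \sum_(j < n) \sum_(q <- clip (ms j) (ms j.+1) (ss j)) cx x z q *: u q.1.
    apply: eq_bigr => j _; rewrite (@VC _ _ u (cx x z) _ M) //.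
    move=> q /mapP[p]; rewrite mem_filter => /andP[hm' ps] -> /=.
    have := hm j (ltn_ord j); have := msle j (ltn_ord j); move: hm'; rewrite /meets /M => /andP[a b] c; lia.
  apply: (realize xn un (ms := ms) (T := fun j => clip (ms j) (ms j.+1) (ss j)) zs hm).
  move=> j jn; have [[_ [vs ss0]] _] := hss j jn; exact: clip_good (hm j jn) ss0 vs.
have Z0 := Znorm_ge0 xn un zs.
have s5 : \sum_(j < n) `|\sum_(i < M) e j i *: u i| <= C * (Znorm x u z + n%:R * d).
  apply: le_trans step3 _; rewrite ler_pM2l // lerD2r //.
move: s5; set S := \sum_(j < n) _; rewrite -mulr_natl => s5.
have Cn := ler0n R n.
nra.
Qed.

End S7.
Section S8.
Variable R : realType.
Variables X U : normedModType R.
Variable x : nat -> X.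
Variable u : nat -> U.
Hypothesis xn : forall n, `|x n| = 1.
Hypothesis un : normalized_seq u.
Hypothesis uu : one_unconditional u.
Variable C : R.
Hypothesis C0 : 0 < C.
Hypothesis Htsi : forall (n N : nat) (b : nat -> nat -> R),
      block_coeffs n N b ->
      (forall j, (j < n)%N -> `|block_vec u N b j| = 1) ->
      (forall i, b 0%N i != 0 -> (n <= i.+1)%N) ->
      equiv_l1 C n (block_vec u N b).

Lemma pairing_ext (f1 f2 a1 a2 : nat -> R) N : (forall i, f1 i * a1 i = f2 i * a2 i) ->
  pairing f1 a1 N = pairing f2 a2 N.
Proof. by move=> h; apply: eq_bigr => i _; apply: h. Qed.

Lemma PJ (y g z : nat -> R) m m' N eps :
  (m < m')%N -> in_Y x u y -> Ynorm x u y = 1 -> (forall i, (i < m)%N -> y i = 0) ->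
  supported_below g m' ->
  (forall a N, supported_below a N -> `|pairing (fun i => y i - g i) a N| <= eps * Znorm x u a) ->
  0 <= eps -> supported_below z N ->
  `|pairing y z N| <= Znorm x u (zb z m m') + 3 * eps * Znorm x u z.
Proof.
move=> mm hy y1 y0 gs app e0 zs.
have E1 : pairing y z N = pairing g z N + pairing (fun i => y i - g i) z N.
  by rewrite /pairing -big_split; apply: eq_bigr => i _ /=; ring.
have E2 : pairing g z N = pairing g (zb z 0 m') N.
  apply: pairing_ext => i; rewrite /zb /=; case: (ltnP i m') => im //.
  by rewrite gs // !mul0r.
have E3 : pairing g (zb z 0 m') N =
   pairing y (zb z 0 m') N - pairing (fun i => y i - g i) (zb z 0 m') N.
  by rewrite /pairing -sumrB; apply: eq_bigr => i _ /=; ring.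
have E4 : pairing y (zb z 0 m') N = pairing y (zb z m m') N.
  apply: pairing_ext => i; rewrite /zb /=; case: (ltnP i m) => im.
    by rewrite y0 // !mul0r.
  by [].
rewrite E1 E2 E3 E4.
have b1 : `|pairing y (zb z m m') N| <= Znorm x u (zb z m m').
  by have := Ynorm_pair xn un hy (zb_supp m m' zs); rewrite y1 mul1r.
have b2 := app z N zs.
have b3 : `|pairing (fun i => y i - g i) (zb z 0 m') N| <= eps * (2 * Znorm x u z).
  apply: le_trans (app _ N (zb_supp 0 m' zs)) _; rewrite ler_wpM2l //.
  exact: (SB xn un uu zs (leq_ltn_trans (leq0n m) mm)).
have Z0 := Znorm_ge0 xn un zs.
set p1 := pairing y _ N in b1 *; set p2 := pairing _ z N in b2 *; set p3 := pairing _ (zb z 0 m') N in b3 *.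
apply: le_trans (ler_normD _ _) _.
apply: le_trans (lerD (ler_normB _ _) (lexx _)) _.
nra.
Qed.

Definition Inv n (eps : R) (ys : seq (nat -> R)) (ms : nat -> nat) (gs : nat -> nat -> R) :=
  (n <= ms 0%N)%N /\ (forall j, (j < size ys)%N -> (ms j < ms j.+1)%N) /\
  forall j, (j < size ys)%N ->
    [/\ in_Y x u (nth (fun _ => 0) ys j), Ynorm x u (nth (fun _ => 0) ys j) = 1,
        (forall i, (i < ms j)%N -> nth (fun _ => 0) ys j i = 0),
        supported_below (gs j) (ms j.+1) &
        (forall a N, supported_below a N ->
           `|pairing (fun i => nth (fun _ => 0) ys j i - gs j i) a N| <= eps * Znorm x u a)].

Lemma ME (ys : seq (nat -> R)) ms gs (a : nat -> R) :
  Inv (size ys) (size ys).+1%:R^-1 ys ms gs ->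
  Ynorm x u (fun i => \sum_(m < size ys) a m * (nth (fun _ => 0) ys m) i)
    <= (2 * C + 3) * \big[Num.max/0]_(m < size ys) `|a m|.
Proof.
set n := size ys; set eps : R := n.+1%:R^-1.
move=> [n0 [hm hy]].
set mx := \big[Num.max/0]_(m < n) `|a m|.
have mx0 : 0 <= mx.
  rewrite /mx; elim/big_ind: _ => //; first by move=> p q hp hq; rewrite le_max hp.
have amx : forall m : 'I_n, `|a m| <= mx by move=> m; apply: le_bigmax.
have e0 : 0 <= eps by rewrite /eps invr_ge0.
have neps : n%:R * eps <= 1.
  by rewrite /eps ler_pdivrMr ?ltr0Sn // mul1r ler_nat.
apply: (Ynorm_le xn un) => z N zs Z1.
set p := fun m : nat => pairing (nth (fun _ => 0) ys m) z N.
have -> : pairing (fun i => \sum_(m < n) a m * nth (fun _ => 0) ys m i) z N =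
   \sum_(m < n) a m * p m.
  rewrite /pairing /p; under eq_bigr => i _ do rewrite mulr_suml.
  rewrite exchange_big /=; apply: eq_bigr => m _; rewrite mulr_sumr.
  by apply: eq_bigr => i _; rewrite mulrA.
apply: le_trans (ler_norm_sum _ _ _) _.
apply: le_trans (_ : \sum_(m < n) mx * `|p m| <= _).
  by apply: ler_sum => m _; rewrite normrM ler_wpM2r.
rewrite -mulr_sumr mulrC ler_wpM2r //.
have Z0 := Znorm_ge0 xn un zs.
have pj : forall m : 'I_n, `|p m| <= Znorm x u (zb z (ms m) (ms m.+1)) + 3 * eps * Znorm x u z.
  move=> m; have [h1 h2 h3 h4 h5] := hy m (ltn_ord m).
  exact: (PJ (hm m (ltn_ord m)) h1 h2 h3 h4 h5 e0 zs).
apply: le_trans (ler_sum _ (fun m _ => pj m)) _.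
rewrite big_split /= sumr_const card_ord.
have kl := KL xn un uu C0 Htsi n0 hm zs.
rewrite -/n in kl.
have h1 : C * Znorm x u z <= C by rewrite ler_piMr // ltW.
have h2 : n%:R * eps * Znorm x u z <= 1.
  have ne0 : 0 <= n%:R * eps by apply: mulr_ge0.
  by rewrite -[X in _ <= X]mul1r; apply: ler_pM.
rewrite -mulr_natr; nra.
Qed.

End S8.
Section S9.
Variable R : realType.
Variables X U : normedModType R.
Variable x : nat -> X.
Variable u : nat -> U.
Hypothesis xn : forall n, `|x n| = 1.
Hypothesis un : normalized_seq u.
Hypothesis uu : one_unconditional u.
Variable C : R.
Hypothesis C0 : 0 < C.
Hypothesis Htsi : forall (n N : nat) (b : nat -> nat -> R),
      block_coeffs n N b ->
      (forall j, (j < n)%N -> `|block_vec u N b j| = 1) ->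
      (forall i, b 0%N i != 0 -> (n <= i.+1)%N) ->
      equiv_l1 C n (block_vec u N b).

Lemma game n k : forall ys ms gs, (size ys + k = n)%N ->
  Inv x u n (n.+1%:R^-1) ys ms gs -> asymp_c0_game x u (2 * C + 3) k ys.
Proof.
elim: k => [|k IH] ys ms gs hs hI.
  move: hs; rewrite addn0 => hs; subst n => /= a.
  exact: (ME xn un uu C0 Htsi a hI).
have eps0 : 0 < (n.+1%:R : R)^-1 by rewrite invr_gt0 ltr0Sn.
set j0 := size ys.
exists (Wm x u (ms j0)); split. exact: Wm_sub xn un (ms j0).
move=> y [hyY hy0] y1.
have [g [M [gsM app]]] := hyY _ eps0.
pose ms' := fun j => if j == j0.+1 then maxn M (ms j0).+1 else ms j.
pose gs' := fun j => if j == j0 then g else gs j.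
apply: (IH (rcons ys y) ms' gs'); first by rewrite size_rcons addSnnS.
move: hI => [n0 [hm hy]].
have ms'E : forall j, (j <= j0)%N -> ms' j = ms j.
  by move=> j jj; rewrite /ms'; case: eqP => // e; move: jj; rewrite e ltnn.
split; first by rewrite ms'E.
split.
  move=> j; rewrite size_rcons ltnS leq_eqVlt => /orP[/eqP ->|jj].
    by rewrite ms'E // /ms' eqxx; apply: leq_trans (leq_maxr _ _).
  by rewrite !ms'E ?(ltnW jj) //; apply: hm.
move=> j; rewrite size_rcons ltnS leq_eqVlt nth_rcons => /orP[/eqP ->|jj].
  rewrite ltnn eqxx ms'E // /ms' eqxx /gs' eqxx; split => //.
  by move=> i /(leq_trans (leq_maxl _ _)) /gsM.
rewrite jj ms'E ?(ltnW jj) // ms'E ?jj // /gs' (ltn_eqF jj).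
exact: hy.
Qed.

End S9.

Theorem propositionA7 (R : realType)
  (X : completeNormedModType R) (x : nat -> X)
  (U : completeNormedModType R) (u : nat -> U) :
  separable X ->
  pm_dense_in_sphere x ->
  schauder_basis u -> normalized_seq u -> one_unconditional u ->
  boundedly_complete u ->
  tsirelson_property u ->
  Y_asymptotic_c0 x u.
Proof.
move=> _ [xn _] _ un uu _ [C [C0 Htsi]].
exists (2 * C + 3); split; first by lra.
move=> k; apply: (game xn un uu C0 Htsi (n := k) (ms := fun _ => k) (gs := fun _ _ => 0)) => //.
Qed.
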